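(* Let $\mathbb K$ be an algebraically closed field of characteristic zero, let $N\geq 1$, and let $f\in\mathbb K[x_0,\ldots,x_N]$ be a homogeneous polynomial of degree $d\geq 2$ without multiple irreducible factors, with associated reduced hypersurface $X=V(f)\subset\mathbb P^N$. Suppose that the hessian determinant $\operatorname{hess}_f=\det\left[\frac{\partial^2 f}{\partial x_i\partial x_j}\right]_{0\leq i,j\leq N}$ is identically zero. Then $$X^*\subsetneq Z_X\subsetneq (\mathbb P^N)^*.$$
   Context: The polar map of $X$ is the rational map $\nabla_f:\mathbb P^N\dashrightarrow(\mathbb P^N)^*$, $p\mapsto\left(\frac{\partial f}{\partial x_0}(p):\cdots:\frac{\partial f}{\partial x_N}(p)\right)$. The polar image is $Z_X=\overline{\nabla_f(\mathbb P^N)}\subseteq(\mathbb P^N)^*$. The dual variety $X^*\subseteq(\mathbb P^N)^*$ is the closure of the image of the Gauss map $X\dashrightarrow(\mathbb P^N)^*$, $p\mapsto [T_pX]$ for smooth points $p$, i.e. $X^*=\overline{\nabla_f(X)}$. *)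

(* Defs.v *)
From HB Require Import structures.
From mathcomp Require Import all_boot all_order all_algebra.
From mathcomp Require Import mpoly.
Set Implicit Arguments. Unset Strict Implicit. Unset Printing Implicit Defensive.
Import GRing.Theory.
Local Open Scope ring_scope.

(* Points of K^(N+1) (homogeneous coordinates). A subset of P^N (resp. of the
   dual (P^N)^* ) is represented by the set of its nonzero representative
   vectors (a cone without 0). *)
Definition vec (K : fieldType) (N : nat) := 'I_N.+1 -> K.

Definition nonzero_vec (K : fieldType) (N : nat) (v : vec K N) : Prop :=
  exists i, v i != 0.

(* Zariski closure in P^N of a set S of points: the nonzero vectors on which
   every homogeneous polynomial vanishing on S also vanishes. *)
Definition proj_closure (K : fieldType) (N : nat) (S : vec K N -> Prop)
  : vec K N -> Prop :=
  fun v => nonzero_vec v /\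
    forall (e : nat) (g : {mpoly K[N.+1]}), g \is e.-homog ->
      (forall s, S s -> g.@[s] = 0) -> g.@[v] = 0.

Definition grad (K : fieldType) (N : nat) (f : {mpoly K[N.+1]}) (p : vec K N)
  : vec K N := fun i => (mderiv i f).@[p].

(* image of the polar map on the points p of a set A where it is defined *)
Definition polar_image_of (K : fieldType) (N : nat) (f : {mpoly K[N.+1]})
  (A : vec K N -> Prop) : vec K N -> Prop :=
  fun w => exists p, A p /\ nonzero_vec p /\ nonzero_vec (grad f p) /\
                     w = grad f p.

Definition polar_image (K : fieldType) (N : nat) (f : {mpoly K[N.+1]}) :=
  proj_closure (polar_image_of f (fun _ => True)).

Definition hypersurface (K : fieldType) (N : nat) (f : {mpoly K[N.+1]}) :=
  fun p : vec K N => nonzero_vec p /\ f.@[p] = 0.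

Definition dual_variety (K : fieldType) (N : nat) (f : {mpoly K[N.+1]}) :=
  proj_closure (polar_image_of f (hypersurface f)).

Definition proj_space (K : fieldType) (N : nat) : vec K N -> Prop :=
  fun v => nonzero_vec v.

Definition mirreducible (K : fieldType) (n : nat) (g : {mpoly K[n]}) : Prop :=
  (1 < msize g)%N /\
  forall a b : {mpoly K[n]}, g = a * b -> (msize a <= 1)%N \/ (msize b <= 1)%N.

Definition no_multiple_factors (K : fieldType) (n : nat) (f : {mpoly K[n]}) :=
  forall g : {mpoly K[n]}, mirreducible g -> ~ exists h, f = g * g * h.

Definition hessian (K : fieldType) (N : nat) (f : {mpoly K[N.+1]})
  : {mpoly K[N.+1]} :=
  \det (\matrix_(i < N.+1, j < N.+1) mderiv i (mderiv j f)).

Definition strict_subset (T : Type) (A B : T -> Prop) : Prop :=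
  (forall x, A x -> B x) /\ exists x, B x /\ ~ A x.

(* Main.v *)
Require Import Defs.
From HB Require Import structures.
From mathcomp Require Import all_boot all_order all_algebra.
From mathcomp Require Import mpoly.
From mathcomp Require Import ring.
From Stdlib Require Import Classical ClassicalEpsilon.
Set Implicit Arguments. Unset Strict Implicit. Unset Printing Implicit Defensive.
Import GRing.Theory.
Local Open Scope ring_scope.


Section Uniq.
Variable K : comNzRingType.

Lemma mmap_uniq (m : nat) (S : comNzRingType) (f : {rmorphism K -> S})
  (phi : {mpoly K[m]} -> S) :
  (forall p q, phi (p + q) = phi p + phi q) ->
  (forall p q, phi (p * q) = phi p * phi q) ->
  (forall c, phi c%:MP = f c) ->
  forall p, phi p = mmap f (fun i => phi 'X_i) p.
Proof.
move=> hD hM hC.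
have h1 : phi 1 = 1 by rewrite -mpolyC1 hC rmorph1.
have hX : forall x k, phi (x ^+ k) = phi x ^+ k.
  by move=> x; elim=> [|k IH]; rewrite ?expr0 ?h1 // !exprS hM IH.
move=> p; elim/mpolyind: p => [|c mu p _ _ IH].
  by rewrite mmap0 -mpolyC0 hC rmorph0.
rewrite hD mmapD IH; congr (_ + _).
rewrite mmapZ mmapX -mul_mpolyC hM hC; congr (_ * _).
rewrite mpolyXE_id (big_morph phi hM h1); apply: eq_bigr => i _.
by rewrite hX.
Qed.
End Uniq.

Section MmapInst.
Variables (K : comNzRingType) (m : nat) (S : comNzRingType) (f : {rmorphism K -> S}) (h : 'I_m -> S).
Lemma mmap_zmod : zmod_morphism (mmap f h).
Proof. by move=> x y; rewrite mmapB. Qed.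
Lemma mmap_monoid : monoid_morphism (mmap f h).
Proof. by case: (mmap_is_multiplicative h f) => hM h1; split. Qed.
HB.instance Definition _ := GRing.isZmodMorphism.Build {mpoly K[m]} S (mmap f h) mmap_zmod.
HB.instance Definition _ := GRing.isMonoidMorphism.Build {mpoly K[m]} S (mmap f h) mmap_monoid.
End MmapInst.

Notation ev h := (mmap (@mpolyC _ _) h).
Notation shift := (mmap (@mpolyC _ _) (fun i => 'X_(lift ord0 i))).

Section Gen.
Variable K : fieldType.

Lemma mmapXU m (S : comNzRingType) (f : {rmorphism K -> S}) (h : 'I_m -> S) i :
  mmap f h 'X_i = h i.
Proof. by rewrite mmapX mmap1U. Qed.

Lemma mmap_ext m (S : comNzRingType) (f : {rmorphism K -> S}) (h1 h2 : 'I_m -> S) :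
  h1 =1 h2 -> mmap f h1 =1 mmap f h2.
Proof. by move=> e p; rewrite /mmap; apply: eq_bigr => mu _; rewrite (mmap1_eq _ e). Qed.

Lemma mmap_idX m (p : {mpoly K[m]}) : mmap (@mpolyC _ _) (fun i => 'X_i) p = p.
Proof.
rewrite -[RHS](comp_mpoly_id p) /comp_mpoly; apply: mmap_ext => i.
by rewrite tnth_mktuple.
Qed.

Lemma mpoly_gen_ind m (Pr : {mpoly K[m]} -> Prop) :
  (forall c, Pr c%:MP) -> (forall i, Pr 'X_i) ->
  (forall p q, Pr p -> Pr q -> Pr (p + q)) ->
  (forall p q, Pr p -> Pr q -> Pr (p * q)) -> forall p, Pr p.
Proof.
move=> hC hX hD hM p; elim/mpolyind: p => [|c mu p _ _ IH].
  by rewrite -mpolyC0.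
apply: (hD) => //; rewrite -mul_mpolyC; apply: (hM) => //.
rewrite mpolyXE_id; apply: (big_ind Pr); [by rewrite -mpolyC1 | exact: hM|].
move=> i Hi; elim: (mu i) => [|k IHk]; first by rewrite expr0 -mpolyC1.
by rewrite exprS; apply: hM.
Qed.

Definition consf n m (u : {mpoly K[n]}) (h : 'I_m -> {mpoly K[n]}) : 'I_m.+1 -> {mpoly K[n]} :=
  fun i => if unlift ord0 i is Some j then h j else u.

Lemma consf0 n m u (h : 'I_m -> {mpoly K[n]}) : consf u h ord0 = u.
Proof. by rewrite /consf unlift_none. Qed.
Lemma consfS n m u (h : 'I_m -> {mpoly K[n]}) j : consf u h (lift ord0 j) = h j.
Proof. by rewrite /consf liftK. Qed.

Definition uni0 m (P : {mpoly K[m.+1]}) : {poly {mpoly K[m]}} :=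
  mmap (polyC \o @mpolyC m K)
    (fun i => if unlift ord0 i is Some j then ('X_j)%:P else 'X) P.

Lemma uni0K m (P : {mpoly K[m.+1]}) : (map_poly shift (uni0 P)).['X_ord0] = P.
Proof.
pose phi := fun P : {mpoly K[m.+1]} => (map_poly shift (uni0 P)).['X_(@ord0 m)].
change (phi P = P).
rewrite (@mmap_uniq _ _ _ (@mpolyC _ K) phi); first last.
- by move=> c; rewrite /phi /uni0 mmapC /= map_polyC /= hornerC mmapC.
- move=> p q; rewrite /phi /uni0 rmorphM /= rmorphM /= hornerM.
  done.
- by move=> p q; rewrite /phi /uni0 rmorphD /= rmorphD /= hornerD.
rewrite -[RHS]mmap_idX; apply: mmap_ext => i.
rewrite /phi /uni0 mmapXU; case: (unliftP ord0 i) => [j ->|->].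
  by rewrite map_polyC hornerC; apply: mmapXU.
by rewrite map_polyX hornerX.
Qed.

Lemma uni0_eq0 m (P : {mpoly K[m.+1]}) : uni0 P = 0 -> P = 0.
Proof. by move=> e; rewrite -[P]uni0K e rmorph0 horner0. Qed.

Lemma ev_cons n m (u : {mpoly K[n]}) (h : 'I_m -> {mpoly K[n]}) P :
  ev (consf u h) P = (map_poly (ev h) (uni0 P)).[u].
Proof.
pose phi := fun P : {mpoly K[m.+1]} => (map_poly (ev h) (uni0 P)).[u].
change (ev (consf u h) P = phi P).
rewrite (@mmap_uniq _ _ _ (@mpolyC _ K) phi); first last.
- by move=> c; rewrite /phi /uni0 mmapC /= map_polyC /= hornerC mmapC.
- by move=> p q; rewrite /phi /uni0 rmorphM /= rmorphM /= hornerM.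
- by move=> p q; rewrite /phi /uni0 rmorphD /= rmorphD /= hornerD.
apply: mmap_ext => i.
rewrite /phi /uni0 mmapXU /consf; case: (unliftP ord0 i) => [j _|_].
  by rewrite map_polyC hornerC; symmetry; apply: mmapXU.
by rewrite map_polyX hornerX.
Qed.

End Gen.

Section Kill.
Variable K : fieldType.
Hypothesis pcK : [pchar K] =i pred0.
Variable n : nat.
Local Notation A := {mpoly K[n]}.
Local Notation F := {fraction A}.
Local Notation "x %:F" := (@FracField.tofrac _ x) (format "x %:F").
Local Notation tof := (@FracField.tofrac _).

Definition depf m (h : 'I_m -> A) := exists P : {mpoly K[m]}, P != 0 /\ ev h P = 0.
Definition inR m (h : 'I_m -> A) (a : A) := exists c : {mpoly K[m]}, a = ev h c.
Definition alg m (h : 'I_m -> A) u :=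
  exists Q : {poly A}, [/\ Q != 0, forall i, inR h Q`_i & Q.[u] = 0].

Lemma dep_alg m (h : 'I_m -> A) u : ~ depf h -> depf (consf u h) -> alg h u.
Proof.
move=> ndh [P [Pn0 PE]]; exists (map_poly (ev h) (uni0 P)); split.
- apply/eqP => Q0; apply: ndh.
  have U0 : uni0 P != 0 by apply/eqP => /uni0_eq0 /eqP; rewrite (negbTE Pn0).
  exists (lead_coef (uni0 P)); split; first by rewrite lead_coef_eq0.
  by rewrite lead_coefE -coef_map Q0 coef0.
- by move=> i; exists (uni0 P)`_i; rewrite coef_map.
- by rewrite -ev_cons.
Qed.

Definition der (a : 'I_n -> F) (p : A) : F := \sum_k a k * (p^`M(k))%:F.

Lemma derD a : {morph der a : x y / x + y}.
Proof.
move=> x y; rewrite /der -big_split; apply: eq_bigr => k _.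
by rewrite mderivD rmorphD mulrDr.
Qed.

Lemma derM a p q : der a (p * q) = der a p * q%:F + p%:F * der a q.
Proof.
rewrite /der mulr_suml mulr_sumr -big_split; apply: eq_bigr => k _.
rewrite mderivM rmorphD !rmorphM /=; ring.
Qed.

Lemma derC a c : der a c%:MP = 0.
Proof. by rewrite /der big1 // => k _; rewrite mderivC rmorph0 mulr0. Qed.

Lemma derXU a j : der a 'X_j = a j.
Proof.
rewrite /der (bigD1 j) //= big1 ?addr0.
  rewrite mderivX mnm1E eqxx.
  have -> : (U_(j) - U_(j) = 0)%MM by apply/mnmP=> i; rewrite mnmBE subnn mnm0E.
  by rewrite mpolyX0 scale1r rmorph1 mulr1.
by move=> k nkj; rewrite mderivX mnm1E eq_sym (negbTE nkj) scale0r rmorph0 mulr0.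
Qed.

Lemma der0 a : der a 0 = 0.
Proof. by rewrite -mpolyC0 derC. Qed.

Lemma der_ev_kill a m (h : 'I_m -> A) :
  (forall i, der a (h i) = 0) -> forall c, der a (ev h c) = 0.
Proof.
move=> hk; apply: mpoly_gen_ind.
- by move=> c; rewrite mmapC derC.
- by move=> i; rewrite mmapXU.
- by move=> p q hp hq; rewrite rmorphD derD hp hq addr0.
- by move=> p q hp hq; rewrite rmorphM derM hp hq mul0r mulr0 addr0.
Qed.

Lemma der_horner a (u : A) (Q : {poly A}) :
  (forall i, der a Q`_i = 0) -> der a Q.[u] = (Q^`().[u])%:F * der a u.
Proof.
elim/poly_ind: Q => [|Q c IH] hQ.
  by rewrite horner0 der0 deriv0 horner0 rmorph0 mul0r.
have hQ1 : forall i, der a Q`_i = 0.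
  by move=> i; have := hQ i.+1; rewrite coefD coefMX coefC /= addr0.
have hc : der a c = 0.
  by have := hQ 0%N; rewrite coefD coefMX coefC /= add0r.
rewrite hornerMXaddC derD hc addr0 derM IH //.
rewrite derivD derivC addr0 derivM derivX mulr1.
rewrite hornerD hornerM hornerX rmorphD rmorphM /=; ring.
Qed.

Lemma natA_neq0 k : (0 < k)%N -> (k%:R : A) != 0.
Proof.
move=> k0; rewrite -mpolyC_nat mpolyC_eq0.
by move/pcharf0P: pcK => ->; rewrite -lt0n.
Qed.

Lemma kill m (h : 'I_m -> A) u a :
  ~ depf h -> (forall i, der a (h i) = 0) -> depf (consf u h) -> der a u = 0.
Proof.
move=> ndh hk dc; have [Q0 [Q0n0 Q0c Q0u]] := dep_alg ndh dc.
case: (eqVneq (der a u) 0) => // du.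
suff: forall k (Q : {poly A}), (size Q <= k)%N -> Q != 0 ->
    (forall i, inR h Q`_i) -> Q.[u] = 0 -> False.
  by move/(_ _ Q0 (leqnn _)); move=> H; case: (H Q0n0 Q0c Q0u).
elim=> [|k IH] Q szQ Qn0 Qc Qu.
  by move: Qn0; rewrite -size_poly_eq0 -leqn0 szQ.
have kQ : forall i, der a Q`_i = 0.
  by move=> i; case: (Qc i) => c ->; apply: der_ev_kill.
have := der_horner u kQ; rewrite Qu der0 => /esym/eqP.
rewrite mulf_eq0 (negbTE du) orbF -(rmorph0 tof) tofrac_eq => /eqP Q'u.
have sz2 : (1 < size Q)%N.
  rewrite ltnNge; apply/negP => /size1_polyC eQ.
  move: Qu; rewrite eQ hornerC => q0; move: Qn0; by rewrite eQ q0 eqxx.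
apply: (IH Q^`()) => //.
- by rewrite -ltnS (leq_trans (lt_size_deriv Qn0) szQ).
- apply/eqP => d0; have := congr1 (fun p : {poly A} => p`_(size Q).-2) d0.
  rewrite coef_deriv coef0 -mulr_natr => /eqP; rewrite mulf_eq0.
  have -> : (size Q).-2.+1 = (size Q).-1 by case: (size Q) sz2 => [|[|s]].
  rewrite -lead_coefE lead_coef_eq0 (negbTE Qn0) /=.
  by apply/negP; apply: natA_neq0; case: (size Q) sz2.
- move=> i; case: (Qc i.+1) => c e; exists (c *+ i.+1).
  by rewrite coef_deriv e rmorphMn.
Qed.

End Kill.

Section Count.
Variable K : fieldType.

Definition bnd n D (p : {mpoly K[n]}) := forall mu, mu \in msupp p -> (mdeg mu <= D)%N.

Lemma bndM n D1 D2 (p q : {mpoly K[n]}) : bnd D1 p -> bnd D2 q -> bnd (D1 + D2) (p * q).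
Proof.
move=> hp hq mu /msuppM_le /allpairsP [[m1 m2] /= [h1 h2 ->]].
by rewrite mdegD leq_add // ?hp ?hq.
Qed.

Lemma bnd1 n : bnd 0 (1 : {mpoly K[n]}).
Proof. by move=> mu; rewrite -mpolyC1 msupp1 inE => /eqP ->; rewrite mdeg0. Qed.

Lemma bnd_mono n D D' (p : {mpoly K[n]}) : (D <= D')%N -> bnd D p -> bnd D' p.
Proof. by move=> le hp mu /hp /leq_trans; apply. Qed.

Lemma bndX n D (p : {mpoly K[n]}) j : bnd D p -> bnd (j * D) (p ^+ j).
Proof.
move=> hp; elim: j => [|j IH]; first by rewrite expr0 mul0n; exact: bnd1.
by rewrite exprS mulSn; apply: bndM.
Qed.

Lemma bnd_prod n m (F : 'I_m -> {mpoly K[n]}) (D : 'I_m -> nat) :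
  (forall i, bnd (D i) (F i)) -> bnd (\sum_i D i) (\prod_i F i).
Proof.
move=> hF; apply: (big_ind2 (fun s p => bnd s p)) => //; first exact: bnd1.
by move=> s1 p1 s2 p2; apply: bndM.
Qed.

Lemma bndD n D (p q : {mpoly K[n]}) : bnd D p -> bnd D q -> bnd D (p + q).
Proof. by move=> hp hq mu /msuppD_le; rewrite mem_cat => /orP [/hp|/hq]. Qed.

Lemma bndZ n D c (p : {mpoly K[n]}) : bnd D p -> bnd D (c *: p).
Proof. by move=> hp mu /msuppZ_le /hp. Qed.

Lemma bnd_msize n (p : {mpoly K[n]}) : bnd (msize p) p.
Proof. by move=> mu /msize_mdeg_lt /ltnW. Qed.

Lemma kernel_rV (p q : nat) (M : 'M[K]_(p, q)) : (q < p)%N ->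
  exists2 v : 'rV_p, v != 0 & v *m M = 0.
Proof.
move=> lt; have : kermx M != 0.
  rewrite -mxrank_eq0 mxrank_ker subn_eq0 -ltnNge.
  exact: (leq_ltn_trans (rank_leq_col M) lt).
case: (pickP (fun i => row i (kermx M) != 0)) => [i ri _|none].
  exists (row i (kermx M)) => //; apply/eqP; rewrite -sub_kermx; exact: row_sub.
move/eqP => []; apply/row_matrixP => i; rewrite row0.
by have := none i => /= /negbFE /eqP.
Qed.


Lemma expn_mono a b j : (a <= b)%N -> (a ^ j <= b ^ j)%N.
Proof. by move=> ab; elim: j => [|j IH]; rewrite ?expn0 // !expnS leq_mul. Qed.

Lemma count_ineq n m e : (n < m)%N ->
  (((m * ((((m * e).+1) ^ n).+1) * e).+1) ^ n < ((((m * e).+1) ^ n).+1) ^ m)%N.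
Proof.
move=> lt; set c := (m * e).+1; set k := (c ^ n).+1.
have h1 : ((m * k * e).+1 <= c * k)%N.
  by rewrite /c mulSn -mulnA [(k * e)%N]mulnC mulnA addnC -addn1 leq_add2l.
apply: (leq_ltn_trans (expn_mono n h1)); rewrite expnMn.
apply: (@leq_trans (k ^ n.+1)); last by apply: leq_pexp2l.
by rewrite expnS ltn_pmul2r ?expn_gt0 //.
Qed.

Lemma count_dep n m (h : 'I_m -> {mpoly K[n]}) : (n < m)%N -> depf h.
Proof.
move=> lt.
pose e := \max_(i < m) msize (h i).
have he : forall i, bnd e (h i).
  by move=> i; apply: (bnd_mono (leq_bigmax i)); apply: bnd_msize.
pose c := (m * e).+1; pose k := (c ^ n).+1; pose B := (m * k * e).+1.
pose SI := {ffun 'I_m -> 'I_k}; pose TI := {ffun 'I_n -> 'I_B}.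
pose ms (f : SI) : 'X_{1..m} := [multinom (f i : nat) | i < m].
pose mt (g : TI) : 'X_{1..n} := [multinom (g i : nat) | i < n].
have ms_inj : injective ms.
  move=> f1 f2 /mnmP e12; apply/ffunP => i; apply/val_inj.
  by have := e12 i; rewrite !mnmE.
pose M := \matrix_(a < #|SI|, b < #|TI|)
   (ev h 'X_[ms (enum_val a)])@_(mt (enum_val b)).
have card_lt : (#|TI| < #|SI|)%N.
  by rewrite !card_ffun !card_ord; apply: count_ineq.
have [v vn0 vM] := kernel_rV M card_lt.
exists (\sum_a v 0 a *: 'X_[ms (enum_val a)]); split.
  apply: contra vn0 => /eqP P0; apply/eqP/rowP => a.
  have := congr1 (mcoeff (ms (enum_val a))) P0.
  rewrite mcoeff0 raddf_sum (bigD1 a) //= big1 ?addr0.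
    by rewrite mcoeffZ mcoeffX eqxx mulr1 mxE.
  move=> a' na'; rewrite mcoeffZ mcoeffX.
  by rewrite (inj_eq ms_inj) (inj_eq enum_val_inj) (negbTE na') mulr0.
apply/mpolyP => nu; rewrite mcoeff0 rmorph_sum raddf_sum /=.
under eq_bigr do rewrite mmapZ mcoeffCM.
case: (boolP [forall i, nu i < B]%N) => [/forallP hnu | /forallPn [i hi]].
  pose g : TI := [ffun i => Ordinal (hnu i)].
  have eg : mt g = nu by apply/mnmP => i; rewrite mnmE ffunE.
  have := congr1 (fun w : 'rV_#|TI| => w 0 (enum_rank g)) vM.
  rewrite !mxE => H; rewrite -[RHS]H; apply: eq_bigr => a _.
  by rewrite mxE enum_rankK eg.
rewrite big1 // => a _; rewrite memN_msupp_eq0 ?mulr0 //.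
apply/negP => hin.
have hb : bnd (m * k * e) (ev h 'X_[ms (enum_val a)]).
  rewrite mmapX /mmap1.
  apply: (bnd_mono (D := \sum_(j < m) (ms (enum_val a) j * e)%N)).
    rewrite -mulnA (_ : (m * (k * e) = \sum_(j < m) (k * e))%N); last first.
      by rewrite sum_nat_const card_ord.
    by apply: leq_sum => j _; rewrite mnmE leq_mul2r ltnW ?orbT.
  by apply: bnd_prod => j; apply: bndX.
have := hb _ hin; rewrite leqNgt => /negP; apply.
rewrite -leqNgt in hi; apply: (leq_trans hi).
by rewrite mdegE (bigD1 i) //= leq_addr.
Qed.

End Count.

Section Greedy.
Variable K : fieldType.
Variable n : nat.
Local Notation A := {mpoly K[n]}.
Local Notation F := {fraction A}.
Local Notation "x %:F" := (@FracField.tofrac _ x) (format "x %:F").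
Local Notation tof := (@FracField.tofrac _).

Definition elts m (h : 'I_m -> A) (a : A) := exists i, h i = a.

Lemma elts_cons m (h : 'I_m -> A) c a : elts (consf c h) a <-> (a = c \/ elts h a).
Proof.
split.
  case=> i <-; case: (unliftP ord0 i) => [j ->|->].
    by right; exists j; rewrite consfS.
  by left; rewrite consf0.
case=> [->|[j <-]]; first by exists ord0; rewrite consf0.
by exists (lift ord0 j); rewrite consfS.
Qed.

Lemma greedy (cands : seq A) m0 (h0 : 'I_m0 -> A) : ~ depf h0 ->
  exists E : seq A, exists m, exists h : 'I_m -> A,
   [/\ ~ depf h, m = (size E + m0)%N,
       (forall a, elts h a <-> (a \in E \/ elts h0 a)),
       {subset E <= cands} &
       forall c, c \in cands -> elts h c \/
         exists m', exists h' : 'I_m' -> A,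
           [/\ ~ depf h', (forall i, elts h (h' i)) & depf (consf c h')]].
Proof.
elim: cands m0 h0 => [|c cs IH] m0 h0 nd.
  exists [::], m0, h0; split => //.
  by move=> a; split; [right|case].
case: (classic (depf (consf c h0))) => dc.
  have [E [m [h [nd' em eh sub cand]]]] := IH m0 h0 nd.
  exists E, m, h; split => //.
    by move=> x /sub xs; rewrite inE xs orbT.
  move=> c'; rewrite inE => /orP [/eqP ->|/cand //].
  right; exists m0, h0; split => // i.
  by apply/eh; right; exists i.
have [E [m [h [nd' em eh sub cand]]]] := IH m0.+1 (consf c h0) dc.
exists (c :: E), m, h; split => //.
- by rewrite em /= addnS.
- move=> a; rewrite eh elts_cons inE; split.
    by case=> [->|[->|]]; [left; rewrite orbT|left; rewrite eqxx|right].
  case=> [/orP [/eqP ->|]|]; [right; left| left | right; right] => //.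
- by move=> x; rewrite !inE => /orP [->//|/sub ->]; rewrite orbT.
move=> c'; rewrite inE => /orP [/eqP ->|/cand //].
by left; apply/eh; right; apply/elts_cons; left.
Qed.

Lemma dext m (g : 'I_m -> A) : (m < n)%N ->
  exists a : 'I_n -> F, (exists k, a k != 0) /\ forall i, der a (g i) = 0.
Proof.
move=> lt.
pose M : 'M[F]_(n, m) := \matrix_(k, i) ((g i)^`M(k))%:F.
have [v vn0 vM] := kernel_rV M lt.
exists (fun k => v 0 k); split.
  case: (pickP (fun k => v 0 k != 0)) => [k hk|none]; first by exists k.
  by case/eqP: vn0; apply/rowP => k; have := none k => /negbFE /eqP ->; rewrite mxE.
move=> i; have := congr1 (fun w : 'rV_m => w 0 i) vM; rewrite !mxE => <-.
by apply: eq_bigr => k _; rewrite mxE.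
Qed.

End Greedy.

Section Euler.
Variable K : fieldType.
Hypothesis pcK : [pchar K] =i pred0.
Variable n : nat.
Local Notation A := {mpoly K[n]}.
Local Notation F := {fraction A}.
Local Notation "x %:F" := (@FracField.tofrac _ x) (format "x %:F").
Local Notation tof := (@FracField.tofrac _).

Lemma dhomog_mderiv (p : A) d i : p \is d.-homog -> p^`M(i) \is d.-1.-homog.
Proof.
move/dhomogP => hp; apply/dhomogP => nu; rewrite mcoeff_msupp mcoeff_mderiv => hnz.
have hin : (nu + U_(i))%MM \in msupp p.
  rewrite mcoeff_msupp; apply: contra hnz => /eqP ->; by rewrite mul0rn.
have e := hp _ hin; change (mdeg (nu + U_(i))%MM = d) in e.
by move: e; rewrite mdegD mdeg1 addn1 => <-.
Qed.

Lemma euler_mono (mu : 'X_{1..n}) i :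
  ('X_i : A) * ((mu i)%:R *: 'X_[mu - U_(i)]) = (mu i)%:R *: 'X_[mu].
Proof.
case: (eqVneq (mu i) 0%N) => [->|nz]; first by rewrite !scale0r mulr0.
rewrite -scalerAr -mpolyXD; congr (_ *: 'X_[_]).
by rewrite addmC submK // lep1mP.
Qed.

Lemma euler (p : A) d : p \is d.-homog -> \sum_i 'X_i * p^`M(i) = p *+ d.
Proof.
move/dhomogP => hp.
have e1 : forall i, 'X_i * p^`M(i) =
    \sum_(mu <- msupp p) p@_mu *: ((mu i)%:R *: 'X_[mu]).
  move=> i; rewrite {1}[p]mpolyE (big_morph (mderiv i) (@mderivD _ _ i) (@mderiv0 _ _ i)) mulr_sumr.
  apply: eq_bigr => mu _.
  by rewrite mderivZ mderivX -scalerAr euler_mono.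
rewrite (eq_bigr _ (fun i _ => e1 i)) exchange_big /= [p in RHS]mpolyE -sumrMnl.
rewrite big_seq [RHS]big_seq; apply: eq_bigr => mu hmu.
rewrite -scaler_sumr -scaler_suml -natr_sum -mdegE hp // -scalerMnl.
by rewrite scale1r scalerMnr.
Qed.

Lemma natF_neq0 k : (0 < k)%N -> (k%:R : F) != 0.
Proof.
by move=> k0; rewrite -(rmorph_nat tof) -(rmorph0 tof) tofrac_eq natA_neq0.
Qed.

Lemma der_hom_f a (f : A) d : f \is d.-homog -> (1 < d)%N ->
  (forall i, der a (f^`M(i)) = 0) -> der a f = 0.
Proof.
move=> hf d2 hk.
have key : der a f *+ d.-1 = \sum_i ('X_i)%:F * der a (f^`M(i)).
  rewrite /der -sumrMnl.
  under eq_bigr => k _ do rewrite -mulrnAr -rmorphMn -(euler (dhomog_mderiv k hf)).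
  under eq_bigr => k _ do rewrite rmorph_sum mulr_sumr.
  rewrite exchange_big /=; apply: eq_bigr => i _; rewrite mulr_sumr.
  apply: eq_bigr => k _; rewrite rmorphM mderiv_comm /=; ring.
move: key; rewrite big1 => [|i _]; last by rewrite hk mulr0.
move/eqP; rewrite -mulr_natr mulf_eq0 => /orP [/eqP //|].
by rewrite (negbTE (natF_neq0 _)) // -ltnS prednK // ltnW.
Qed.

End Euler.

Section MainAlg.
Variable K : fieldType.
Hypothesis pcK : [pchar K] =i pred0.
Variable n : nat.
Local Notation A := {mpoly K[n]}.
Local Notation F := {fraction A}.
Local Notation "x %:F" := (@FracField.tofrac _ x) (format "x %:F").
Local Notation tof := (@FracField.tofrac _).

Lemma grad_dep (f : A) :
  \det (\matrix_(i < n, j < n) mderiv i (mderiv j f)) = 0 ->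
  depf (fun j => mderiv j f).
Proof.
move=> hdet; apply: NNPP => nd.
pose Mf : 'M[F]_n := map_mx tof (\matrix_(i < n, j < n) mderiv i (mderiv j f)).
have : \det Mf == 0 by rewrite det_map_mx hdet rmorph0.
case/det0P => v vn0 vM.
pose a := fun k => v 0 k.
have kg : forall j, der a (mderiv j f) = 0.
  move=> j; have := congr1 (fun w : 'rV_n => w 0 j) vM; rewrite !mxE => <-.
  by apply: eq_bigr => k _; rewrite !mxE.
have ka : forall k, a k = 0.
  move=> k; rewrite -(derXU a k); apply: (kill pcK nd kg).
  exact: count_dep.
by case/eqP: vn0; apply/rowP => k; rewrite mxE; apply: ka.
Qed.

Lemma grad_alg (f : A) d : f != 0 -> f \is d.-homog -> (1 < d)%N ->
  exists g : A, ev (fun j => f^`M(j)) g != 0 /\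
     exists r, ev (fun j => f^`M(j)) g = f * r.
Proof.
move=> fn0 hf d2.
pose gf := fun j : 'I_n => f^`M(j).
pose cands1 := [seq gf j | j <- enum 'I_n].
have nd0 : ~ depf (fun i : 'I_0 => (0 : A)).
  case=> P [Pn0 PE]; move: Pn0 PE; rewrite -(mpolyKC P) mmapC => cn0 c0.
  have : (P@_0)%:MP_[n] == 0 :> A by apply/eqP; exact: c0.
  by rewrite mpolyC_eq0 => /eqP e0; rewrite e0 mpolyC0 eqxx in cn0.
have [E1 [mB [hB [ndB _ eB sub1 cand1]]]] := greedy cands1 nd0.
have eltsB : forall i, exists j, hB i = gf j.
  move=> i; have : elts hB (hB i) by exists i.
  move/eB => [/sub1 /mapP [j _ ->]|[x]]; first by exists j.
  by case: x => [][].
have killB : forall a, (forall i, der a (hB i) = 0) -> forall j, der a (gf j) = 0.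
  move=> a ka j; have /cand1 : gf j \in cands1 by apply/map_f; rewrite mem_enum.
  case=> [[i <-] // | [m' [h' [nd' sub' dep']]]].
  apply: (kill pcK nd' _ dep') => i; case: (sub' i) => i' <-; exact: ka.
case: (classic (depf (consf f hB))) => [dfB|ndfB].
  have [Q [Qn0 Qc Qf]] := dep_alg ndB dfB.
  have ex : exists k, Q`_k != 0.
    by exists (size Q).-1; rewrite -lead_coefE lead_coef_eq0.
  case: (ex_minnP ex) => k0 hk0 hmin.
  have tk : take_poly k0 Q = 0.
    apply/polyP => i; rewrite coef_take_poly coef0; case: ifP => // lt.
    apply/eqP; apply: contraT => nz; have := hmin _ nz; by rewrite leqNgt lt.
  have QE : Q = drop_poly k0 Q * 'X^k0.
    by rewrite -{1}(poly_take_drop k0 Q) tk add0r.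
  set D := drop_poly k0 Q in QE.
  have Df : D.[f] = 0.
    move: Qf; rewrite QE hornerM hornerXn => /eqP.
    by rewrite mulf_eq0 expf_eq0 (negbTE fn0) andbF orbF => /eqP.
  have D0 : D`_0 = Q`_k0 by rewrite coef_drop_poly.
  have DE : D = (D`_0)%:P + drop_poly 1 D * 'X.
    rewrite -{1}(poly_take_drop 1 D) expr1; congr (_ + _).
    apply/polyP => i; rewrite coef_take_poly coefC.
    by case: i => [|i].
  have Dv : D`_0 = f * (- (drop_poly 1 D).[f]).
    move: Df; rewrite {1}DE hornerD hornerC hornerM hornerX => /eqP.
    by rewrite addr_eq0 => /eqP ->; rewrite mulrN mulrC.
  have [c ec] := Qc k0.
  have sig : forall i, {j | hB i = gf j}.
    by move=> i; apply: constructive_indefinite_description; apply: eltsB.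
  pose g := mmap (@mpolyC _ K) (fun i => 'X_(proj1_sig (sig i))) c.
  have eg : ev gf g = ev hB c.
    pose phi := fun c => ev gf (mmap (@mpolyC _ K) (fun i => 'X_(proj1_sig (sig i))) c).
    change (phi c = ev hB c).
    rewrite (@mmap_uniq _ _ _ (@mpolyC _ K) phi); first last.
    - by move=> c'; rewrite /phi !mmapC.
    - by move=> p q; rewrite /phi !rmorphM.
    - by move=> p q; rewrite /phi !rmorphD.
    apply: mmap_ext => i; rewrite /phi !mmapXU.
    by case: (sig i) => j /= ->.
  exists g; split; first by rewrite eg -ec.
  by exists (- (drop_poly 1 D).[f]); rewrite eg -ec -D0 Dv.
have [E2 [m [h [ndh em eh _ cand2]]]] := greedy [seq 'X_j | j <- enum 'I_n] ndfB.
have mle : (m <= n)%N.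
  by rewrite leqNgt; apply/negP => lt; apply: ndh; apply: count_dep.
pose G := fun i : 'I_(size E2 + mB) =>
  match split i with inl j => nth 0 E2 j | inr j => hB j end.
have ltG : (size E2 + mB < n)%N by rewrite -addnS -em.
have [a [[k ak] ka]] := dext G ltG.
have kB : forall i, der a (hB i) = 0.
  by move=> i; have := ka (unsplit (inr i)); rewrite /G unsplitK.
have kE : forall x, x \in E2 -> der a x = 0.
  move=> x xE; have jlt : (index x E2 < size E2)%N by rewrite index_mem.
  have := ka (unsplit (inl (Ordinal jlt))); rewrite /G unsplitK /=.
  by rewrite nth_index.
have kf : der a f = 0 := der_hom_f pcK hf d2 (killB a kB).
have kh : forall i, der a (h i) = 0.
  move=> i; have : elts h (h i) by exists i.
  move/eh => [/kE //|/elts_cons [-> //|[j <-]]]; exact: kB.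
have kX : forall j, der a 'X_j = 0.
  move=> j; have /cand2 : ('X_j : A) \in [seq 'X_j | j <- enum 'I_n].
    by apply/map_f; rewrite mem_enum.
  case=> [[i <-] | [m' [h' [nd' sub' dep']]]]; first exact: kh.
  apply: (kill pcK nd' _ dep') => i; case: (sub' i) => i' <-; exact: kh.
by move: ak; rewrite -(derXU a k) kX eqxx.
Qed.

End MainAlg.

Section NonRoot.
Variable K : closedFieldType.

Lemma K_infinite (s : seq K) : exists x, x \notin s.
Proof.
case: s => [|a s]; first by exists 0.
pose p := \prod_(b <- a :: s) ('X - b%:P) + 1.
have szP : size (\prod_(b <- a :: s) ('X - b%:P)) = (size s).+2.
  by rewrite size_prod_XsubC.
have : size p != 1%N.
  by rewrite /p size_addl szP // size_poly1.
case/closed_rootP => x rx; exists x; apply/negP => hx.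
move: rx; rewrite /root /p hornerD hornerC.
have := root_prod_XsubC (a :: s) x; rewrite hx /root => /eqP ->.
by rewrite add0r oner_eq0.
Qed.

Lemma poly_nonroot (r : {poly K}) : r != 0 -> exists x, r.[x] != 0.
Proof.
move=> rn0; apply: NNPP => hall.
have allr : forall x, root r x.
  by move=> x; apply/negPn/negP => hx; apply: hall; exists x.
have lists : forall k, exists rs : seq K, uniq rs /\ size rs = k.
  elim=> [|k [rs [u s]]]; first by exists [::].
  have [x hx] := K_infinite rs; exists (x :: rs); by rewrite /= hx u s.
have [rs [u s]] := lists (size r).
have hall' : all (root r) rs by apply/allP => x _; apply: allr.
by have := max_poly_roots rn0 hall' u; rewrite s ltnn.
Qed.

Definition consv m (t : K) (v : 'I_m -> K) : 'I_m.+1 -> K :=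
  fun i => if unlift ord0 i is Some j then v j else t.

Lemma meval_cons m t (v : 'I_m -> K) (P : {mpoly K[m.+1]}) :
  P.@[consv t v] = (map_poly (meval v) (uni0 P)).[t].
Proof.
pose phi := fun P : {mpoly K[m.+1]} => (map_poly (meval v) (uni0 P)).[t].
change (P.@[consv t v] = phi P).
rewrite (@mmap_uniq _ _ _ idfun phi); first last.
- by move=> c; rewrite /phi /uni0 mmapC /= map_polyC /= hornerC mevalC.
- by move=> p q; rewrite /phi /uni0 rmorphM /= rmorphM /= hornerM.
- by move=> p q; rewrite /phi /uni0 rmorphD /= rmorphD /= hornerD.
apply: meval_eq => i.
rewrite /phi /uni0 mmapXU /consv; case: (unliftP ord0 i) => [j _|_].
  by rewrite map_polyC hornerC; symmetry; apply: mevalXU.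
by rewrite map_polyX hornerX.
Qed.

Lemma mpoly_nonroot m (P : {mpoly K[m]}) : P != 0 -> exists v, P.@[v] != 0.
Proof.
elim: m P => [|m IH] P Pn0.
  exists (fun _ => 0); move: Pn0; rewrite -(mpolyKC P) mevalC.
  by apply: contra => /eqP ->.
have qn0 : uni0 P != 0 by apply/eqP => /uni0_eq0 /eqP; rewrite (negbTE Pn0).
have lc : lead_coef (uni0 P) != 0 by rewrite lead_coef_eq0.
have [v hv] := IH _ lc.
have rn0 : map_poly (meval v) (uni0 P) != 0.
  apply/eqP => /(congr1 (fun r : {poly K} => r`_(size (uni0 P)).-1)).
  by rewrite coef_map coef0 -lead_coefE => /eqP; rewrite (negbTE hv).
have [t ht] := poly_nonroot rn0.
by exists (consv t v); rewrite meval_cons.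
Qed.

End NonRoot.

Section Homog.
Variable K : fieldType.
Variable n : nat.
Local Notation A := {mpoly K[n]}.

Lemma ev_homog m (h : 'I_m -> A) e (g : {mpoly K[m]}) k :
  g \is k.-homog -> (forall i, h i \is e.-homog) -> ev h g \is (k * e).-homog.
Proof.
move=> /dhomogP hg hh; rewrite [g]mpolyE rmorph_sum big_seq; apply: rpred_sum => mu hmu.
change (mmap (@mpolyC n K) h (g@_mu *: 'X_[mu]) \is (k * e).-homog).
rewrite mmapZ mmapX /mmap1 mul_mpolyC; apply: rpredZ.
have e1 : (k * e = \sum_i mu i * e)%N.
  have := hg mu hmu; change (mdeg mu = k -> (k * e = \sum_i mu i * e)%N).
  by move=> <-; rewrite mdegE big_distrl.
rewrite e1; apply: (big_ind2 (fun s (p : A) => p \is s.-homog)).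
- exact: dhomog1.
- by move=> s1 p1 s2 p2 h1 h2; apply: dhomogM.
- by move=> i _; rewrite mulnC; apply: dhomogMn.
Qed.

Lemma pihomog_sum S (q : 'I_S -> A) (e : 'I_S -> nat) D :
  (forall j, q j \is (e j).-homog) ->
  pihomog mdeg D (\sum_j q j) = \sum_j (if e j == D then q j else 0).
Proof.
move=> hq; rewrite raddf_sum; apply: eq_bigr => j _.
case: eqP => [<-|ne]; first exact: pihomog_dE.
by apply: pihomog_ne0 (hq j); apply/eqP.
Qed.

End Homog.

Lemma X0_neq0 (K : fieldType) m : ('X_(@ord0 m) : {mpoly K[m.+1]}) != 0.
Proof.
apply/eqP => /(congr1 (mcoeff U_(@ord0 m))).
by rewrite mcoeffX eqxx mcoeff0 => /eqP; rewrite oner_eq0.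
Qed.

Unset Implicit Arguments.
Set Strict Implicit.

Theorem corollary1p2 (K : closedFieldType) (N d : nat) (f : {mpoly K[N.+1]}) :
  [pchar K] =i pred0 ->
  (1 <= N)%N ->
  (2 <= d)%N ->
  f != 0 -> f \is d.-homog ->
  no_multiple_factors f ->
  hessian f = 0 ->
  strict_subset (dual_variety f) (polar_image f) /\
  strict_subset (polar_image f) (@proj_space K N).
Proof.
move=> pcK _ d2 fn0 hf _ hess.
pose gf := fun j : 'I_N.+1 => f^`M(j).
have hgf : forall j, gf j \is d.-1.-homog by move=> j; exact: dhomog_mderiv.
have d1 : (0 < d.-1)%N by case: d d2 hf {hgf} => [|[|]].
have evgrad : forall (G : {mpoly K[N.+1]}) p, (ev gf G).@[p] = G.@[grad f p].
  move=> G p.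
  pose phi := fun G : {mpoly K[N.+1]} => (ev gf G).@[p].
  change (phi G = G.@[grad f p]).
  rewrite (@mmap_uniq _ _ _ idfun phi); first last.
  - by move=> c; rewrite /phi mmapC mevalC.
  - by move=> p1 q1; rewrite /phi rmorphM mevalM.
  - by move=> p1 q1; rewrite /phi rmorphD mevalD.
  by apply: meval_eq => i; rewrite /phi mmapXU.
have evsum : forall G : {mpoly K[N.+1]},
    ev gf G = \sum_(k < msize G) ev gf (pihomog mdeg k G).
  by move=> G; rewrite {1}[G](@pihomog_partitionE _ _ mdeg _ _ (leqnn _)) rmorph_sum.
have comp_eq : forall (G : {mpoly K[N.+1]}) (k : 'I_(msize G)),
    pihomog mdeg (k * d.-1) (ev gf G) = ev gf (pihomog mdeg k G).
  move=> G k; rewrite evsum.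
  rewrite (pihomog_sum (e := fun j : 'I_(msize G) => (j * d.-1)%N)); last first.
    by move=> j; apply: ev_homog => //; apply: pihomogP.
  rewrite (bigD1 k) //= eqxx big1 ?addr0 // => j njk.
  rewrite eqn_pmul2r //; case: eqP => // e; case/eqP: njk; exact: val_inj.
split; last first.
  split; first by move=> x [].
  have [G [Gn0 GE]] := grad_dep pcK hess.
  case: (pickP (fun k : 'I_(msize G) => pihomog mdeg k G != 0)) => [k Gk|none];
    last first.
    case/negP: Gn0; rewrite [G](@pihomog_partitionE _ _ mdeg _ _ (leqnn _)) big1 // => k _.
    by have := none k => /negbFE /eqP.
  have eGk : ev gf (pihomog mdeg k G) = 0 by rewrite -comp_eq GE raddf0.
  have nz : pihomog mdeg k G * 'X_ord0 != 0 by rewrite mulf_neq0 // X0_neq0.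
  have [v hv] := mpoly_nonroot nz.
  move: hv; rewrite mevalM mulf_eq0 negb_or mevalXU => /andP [hv v0].
  exists v; split; first by exists ord0.
  case=> _ H; move/eqP: hv; apply; apply: (H k); first exact: pihomogP.
  by move=> s [p [_ [_ [_ ->]]]]; rewrite -evgrad eGk meval0.
have [g [gn0 [r gr]]] := grad_alg pcK fn0 hf d2.
case: (pickP (fun k : 'I_(msize g) => ev gf (pihomog mdeg k g) != 0)) => [k gk|none];
  last first.
  case/negP: gn0; rewrite evsum big1 // => k _.
  by have := none k => /negbFE /eqP.
have [r' er'] : exists r', ev gf (pihomog mdeg k g) = f * r'.
  rewrite -comp_eq gr {1}[r](@pihomog_partitionE _ _ mdeg _ _ (leqnn _)) mulr_sumr.
  rewrite (pihomog_sum (e := fun j : 'I_(msize r) => (d + j)%N)); last first.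
    by move=> j; apply: dhomogM => //; apply: pihomogP.
  exists (\sum_(j < msize r) if (d + j == k * d.-1)%N then pihomog mdeg j r else 0).
  rewrite mulr_sumr; apply: eq_bigr => j _; case: ifP => // _; by rewrite mulr0.
have nz : ev gf (pihomog mdeg k g) * 'X_ord0 != 0 by rewrite mulf_neq0 // X0_neq0.
have [p hp] := mpoly_nonroot nz.
move: hp; rewrite mevalM mulf_eq0 negb_or mevalXU => /andP [hp p0].
have grad_nz : nonzero_vec (grad f p).
  apply: NNPP => hz.
  have z : forall i, grad f p i = 0.
    move=> i; apply/eqP; apply/negbNE/negP => hi; apply: hz; exists i; exact: hi.
  have fp : f.@[p] = 0.
    have := congr1 (meval p) (euler hf).
    rewrite rmorph_sum /= big1 => [|i _]; last first.
      by rewrite mevalM; have := z i; rewrite /grad => ->; rewrite mulr0.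
    rewrite mevalMn => /esym/eqP; rewrite -mulr_natr mulf_eq0 => /orP [/eqP //|].
    by move/pcharf0P: pcK => ->; case: d d2 {hgf d1 comp_eq er' hf} => [|[|]].
  by move: hp; rewrite er' mevalM fp mul0r eqxx.
split.
  move=> x [nx H]; split => // e g' hg' van; apply: (H e g' hg') => s [p' [_ rest]].
  by apply: van; exists p'.
exists (grad f p); split.
  split => // e g' hg' van; apply: van; exists p; split => //; split => //.
  by exists ord0.
case=> _ H; move: hp; rewrite evgrad; move/eqP; apply; apply: (H k).
  exact: pihomogP.
by move=> s [p' [[_ fp'] [_ [_ ->]]]]; rewrite -evgrad er' mevalM fp' mul0r.
Qed.
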